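(* Let $T$ be the operator on $H^2$ given by $Tf=\sum_{m=0}^\infty\left(\sum_{n=0}^\infty n!\,\hat f(n+m)\right)z^m$, with domain $D(T)=\{f\in H^2: Tf\in H^2\}$ (i.e. those $f$ for which every inner series converges and the resulting coefficient sequence is square summable). Then every function $f\in D(T)$ is an entire function and can be written as $f(z)=\sum_{n=0}^\infty a_n\frac{z^n}{n!}$ where $\sum_{n=0}^\infty a_n$ converges.
   Context: $H^2$ is the Hardy space of analytic functions $f(z)=\sum_{n\ge0}\hat f(n)z^n$ on the unit disc with $\sum|\hat f(n)|^2<\infty$. *)

(* Defs.v *)
From Stdlib Require Import Reals Arith Factorial.
From Coquelicot Require Import Coquelicot.
Open Scope R_scope.

(* An element f of H^2 is identified with its Taylor coefficient sequence
   c n = \hat f(n), which must be square summable. *)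
Definition in_H2 (c : nat -> C) : Prop :=
  ex_series (fun n => (Cmod (c n)) ^ 2).

Definition in_dom_T (c : nat -> C) : Prop :=
  in_H2 c /\
  exists t : nat -> C,
    (forall m : nat,
       is_series (fun n => (RtoC (INR (fact n)) * c (n + m)%nat)%C) (t m)) /\
    in_H2 t.

Definition is_entire_coef (c : nat -> C) : Prop :=
  forall z : C, ex_pseries c z.

(* Main.v *)
Require Import Defs.
From Stdlib Require Import Reals Arith Factorial Lra Lia.
From Coquelicot Require Import Coquelicot.

Lemma fact_INR_neq0 n : INR (fact n) <> 0.
Proof. apply not_0_INR, fact_neq_0. Qed.

Lemma fin_bound (a : nat -> C) N : exists M, forall n, (n < N)%nat -> Cmod (a n) <= M.
Proof.
  induction N as [|N [M HM]].
  - exists 0. intros; lia.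
  - exists (Rmax M (Cmod (a N))). intros n Hn.
    destruct (Nat.eq_dec n N) as [->|Hne].
    + apply Rmax_r.
    + eapply Rle_trans; [apply HM; lia| apply Rmax_l].
Qed.

Lemma series_bound (a : nat -> C) : ex_series a -> exists M, forall n, Cmod (a n) <= M.
Proof.
  intros H. apply (Cauchy_ex_series (K:=C_AbsRing) (V:=C_CompleteNormedModule)) in H.
  destruct (H (mkposreal 1 Rlt_0_1)) as [N HN].
  destruct (fin_bound a N) as [M HM].
  exists (Rmax M 1). intros n.
  destruct (Nat.lt_ge_cases n N) as [Hl|Hg].
  - eapply Rle_trans; [apply HM; lia| apply Rmax_l].
  - specialize (HN n n Hg Hg). rewrite sum_n_n in HN. simpl in HN.
    change (Cmod (a n) < 1) in HN. eapply Rle_trans; [left; exact HN| apply Rmax_r].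
Qed.

Theorem theorem3 (c : nat -> C) :
  in_dom_T c ->
  is_entire_coef c /\
  exists a : nat -> C,
    (forall n : nat, c n = (a n / RtoC (INR (fact n)))%C) /\ ex_series a.
Proof.
  intros [_ [t [Ht _]]].
  set (a := fun n => (RtoC (INR (fact n)) * c n)%C).
  assert (Ha : ex_series a).
  { exists (t 0%nat). eapply is_series_ext; [|apply (Ht 0%nat)].
    intros n. unfold a. now rewrite Nat.add_0_r. }
  assert (Hc : forall n, c n = (a n / RtoC (INR (fact n)))%C).
  { intros n. unfold a. field. intros Hx. apply (fact_INR_neq0 n).
    apply (f_equal fst) in Hx. exact Hx. }
  split; [| now exists a].
  intros z. destruct (series_bound a Ha) as [M HM].
  unfold ex_pseries.
  apply (ex_series_le (K:=C_AbsRing) (V:=C_CompleteNormedModule) _ (fun n => M * (/ INR (fact n) * Cmod z ^ n))).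
  - intros n. change (Cmod (Cmult (pow_n z n) (c n)) <= M * (/ INR (fact n) * Cmod z ^ n)).
    rewrite Cmod_mult.
    assert (Hp : Cmod (pow_n z n) = Cmod z ^ n).
    { induction n as [|n IH]; simpl. apply Cmod_1. rewrite Cmod_mult, IH. reflexivity. }
    rewrite Hp, Hc, Cmod_div.
    2:{ intros Hx. apply (fact_INR_neq0 n). apply (f_equal fst) in Hx. exact Hx. }
    rewrite Cmod_R, Rabs_pos_eq by (apply pos_INR).
    pose proof (fact_INR_neq0 n). pose proof (pos_INR (fact n)).
    pose proof (pow_le (Cmod z) n (Cmod_ge_0 z)).
    assert (Hf : 0 < / INR (fact n)) by (apply Rinv_0_lt_compat; lra).
    unfold Rdiv. 
    replace (Cmod z ^ n * (Cmod (a n) * / INR (fact n))) with (Cmod (a n) * (/ INR (fact n) * Cmod z ^ n)) by ring.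
    apply Rmult_le_compat_r; [|apply HM]. apply Rmult_le_pos; lra.
  - exists (M * exp (Cmod z)). apply (is_series_scal_l (K:=R_AbsRing) (V:=R_NormedModule) M).
    eapply is_series_ext; [|apply (is_exp_Reals (Cmod z))].
    intros n. change (Cmod z ^ n * / INR (fact n) = / INR (fact n) * Cmod z ^ n). 
    ring.
Qed.
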